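(* If $s\ge 7$ then $\pi\ge 2(n-q-2m)$.
   Context: $G$ is a set of size $n$ and $G(\circ)$, $G(\ast)$ are distinct groups on $G$ with the same identity element. $\mathrm{diff}(\circ,\ast)=\{(a,b):a\circ b\ne a\ast b\}$, $\mathrm{dist}(\circ,\ast)=|\mathrm{diff}(\circ,\ast)|$, $\mathrm{dist}_a=|\{b:a\circ b\ne a\ast b\}|$; $H=\{a:\mathrm{dist}_a=0\}$, $h=|H|$; $K=\{a:\mathrm{dist}_a<n/3\}$, $k=|K|$; $m=\min\{\mathrm{dist}_a:\mathrm{dist}_a>0\}$. Standing assumption: $m\ge 3$. Let $q=\lceil n/3\rceil$ and the profit $\pi=\mathrm{dist}(\circ,\ast)-((k-h)m+(n-k)q)$. Let $S=\{(a,b)\in\mathrm{diff}(\circ,\ast):a,b\in K,\ a\ne b\}$, $s=|S|$. *)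

(* Defs.v *)
From HB Require Import structures.
From mathcomp Require Import all_boot all_order all_algebra.
Set Implicit Arguments. Unset Strict Implicit. Unset Printing Implicit Defensive.
Import Order.TTheory GRing.Theory Num.Theory.

Section Defs.
Variable T : finType.

Definition is_group (op : T -> T -> T) (e : T) : Prop :=
  [/\ associative op, left_id e op, right_id e op &
      forall a, exists b, op a b = e /\ op b a = e].

Variables (o1 o2 : T -> T -> T).

Definition nG : nat := #|T|.

Definition diffset : {set T * T} := [set p | o1 p.1 p.2 != o2 p.1 p.2].
Definition distG : nat := #|diffset|.
Definition dist_at (a : T) : nat := #|[set b | o1 a b != o2 a b]|.
Definition Hset : {set T} := [set a | dist_at a == 0%N].
Definition hG : nat := #|Hset|.
(* K = {a : dist_a < n/3}, i.e. 3 * dist_a < n; k = |K| *)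
Definition Kset : {set T} := [set a | 3 * dist_at a < nG].
Definition kG : nat := #|Kset|.
(* m = min { dist_a : dist_a > 0 } (the default value #|T| is irrelevant
   when the two laws differ, since then the index range is nonempty and
   every dist_a <= #|T|) *)
Definition mG : nat := \big[minn/nG]_(a | 0 < dist_at a) dist_at a.
(* q = ceil(n/3) *)
Definition qG : nat := (nG + 2) %/ 3.
Definition profit : int :=
  (distG%:Z - (((kG%:Z - hG%:Z) * mG%:Z) + ((nG%:Z - kG%:Z) * qG%:Z)))%R.
Definition Sset : {set T * T} :=
  [set p in diffset | [&& p.1 \in Kset, p.2 \in Kset & p.1 != p.2]].
Definition sG : nat := #|Sset|.
End Defs.

(* Main.v *)
Require Import Defs.
From HB Require Import structures.
From mathcomp Require Import all_boot all_order all_algebra.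
From mathcomp Require Import zify.
Import Order.TTheory GRing.Theory Num.Theory.
Set Implicit Arguments. Unset Strict Implicit.

Section G.
Variable T : finType.

Lemma lcancel_g (f : T -> T -> T) e : is_group f e -> forall a b c, f a b = f a c -> b = c.
Proof.
case=> fA f1 f1r finv a b c H.
have [a' [_ Ha']] := finv a.
by rewrite -(f1 b) -(f1 c) -Ha' -!fA H.
Qed.

Lemma rcancel_g (f : T -> T -> T) e : is_group f e -> forall a b c, f b a = f c a -> b = c.
Proof.
case=> fA f1 f1r finv a b c H.
have [a' [Ha' _]] := finv a.
by rewrite -(f1r b) -(f1r c) -Ha' !fA H.
Qed.

Lemma dist_sym (f g : T -> T -> T) a : dist_at f g a = dist_at g f a.
Proof. by apply: eq_card => b; rewrite !inE eq_sym. Qed.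

Lemma dist_prod (f g : T -> T -> T) e (gf : is_group f e) (gg : is_group g e) x y :
  f x y != g x y -> #|T| <= dist_at f g (f x y) + dist_at f g x + dist_at f g y.
Proof.
move=> Hxy.
set W := [set w | (f y w == g y w) && (f x (f y w) == g x (f y w))].
have sub1 : W \subset [set b | f (f x y) b != g (f x y) b].
  apply/subsetP => w; rewrite !inE => /andP [/eqP E1 /eqP E2].
  apply/negP => /eqP E3.
  have : g (g x y) w = g (f x y) w.
    case: gf => fA _ _ _; case: gg => gA _ _ _.
    by rewrite -E3 -fA E2 E1 gA.
  by move/(rcancel_g gg) => E4; rewrite E4 eqxx in Hxy.
have sub2 : ~: W \subset [set b | f y b != g y b] :|: (f y @^-1: [set b | f x b != g x b]).
  apply/subsetP => w; rewrite !inE negb_and => /orP [->//|H]; by rewrite H orbT.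
have c2 := subset_leq_card sub2.
have c3 := leq_trans c2 (leq_card_setU _ _).
rewrite card_preimset in c3; last exact: (lcancel_g gf).
have c1 := subset_leq_card sub1.
have cW := cardsC W.
rewrite /dist_at. lia.
Qed.
End G.

Ltac dsolve := first [congruence | match goal with H : _ \/ _ |- _ => destruct H; dsolve end].

Section C.
Variable T : finType.

Definition meets (p q : T * T) := [|| p.1 == q.1, p.1 == q.2, p.2 == q.1 | p.2 == q.2].

Lemma meetsP (p q : T * T) : meets p q -> p.1 = q.1 \/ p.1 = q.2 \/ p.2 = q.1 \/ p.2 = q.2.
Proof. by rewrite /meets => /or4P [] /eqP; tauto. Qed.

Lemma comb (S : {set T * T}) : (forall p, p \in S -> p.1 != p.2) -> 7 <= #|S| ->
  (exists p p', [/\ p \in S, p' \in S & ~~ meets p p'])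
  \/ (exists x, 2 < #|[set p in S | p.1 == x]|) \/ (exists y, 2 < #|[set p in S | p.2 == y]|).
Proof.
move=> Hd HS.
case: (boolP [exists x, 2 < #|[set p in S | p.1 == x]|]) => [/existsP [x Hx]|Hout].
  by right; left; exists x.
case: (boolP [exists x, 2 < #|[set p in S | p.2 == x]|]) => [/existsP [x Hx]|Hin].
  by right; right; exists x.
case: (boolP [exists p in S, exists p' in S, ~~ meets p p']) => [/existsP [p /andP [pS /existsP [p' /andP [p'S Hm]]]]|Hm].
  by left; exists p, p'.
exfalso.
have out2 x : #|[set p in S | p.1 == x]| <= 2.
  move/existsPn: Hout => /(_ x) H; by rewrite leqNgt.
have in2 x : #|[set p in S | p.2 == x]| <= 2.
  move/existsPn: Hin => /(_ x) H; by rewrite leqNgt.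
have mt p p' : p \in S -> p' \in S -> meets p p'.
  move=> pS p'S; move/existsPn: Hm => /(_ p); rewrite pS /= => /existsPn /(_ p').
  by rewrite p'S /= negbK.
have touch4 v : S \subset [set p in S | p.1 == v] :|: [set p in S | p.2 == v] -> False.
  move/subset_leq_card => H; have := leq_trans H (leq_card_setU _ _).
  have := out2 v; have := in2 v; lia.
have /card_gt0P [[a b] p0S] : 0 < #|S| by lia.
have /subsetPn [[u1 v1] p1S Hn1] : ~~ (S \subset [set p in S | p.1 == a] :|: [set p in S | p.2 == a]).
  by apply/negP => /touch4.
have /subsetPn [[u2 v2] p2S Hn2] : ~~ (S \subset [set p in S | p.1 == b] :|: [set p in S | p.2 == b]).
  by apply/negP => /touch4.
rewrite !inE p1S p2S /= in Hn1 Hn2.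
have claim p : p \in S -> (p.1 == a) || (p.1 == u1) || (p.1 == v1).
  case: p => u w pS /=.
  have dab := Hd _ p0S; have d1 := Hd _ p1S; have d2 := Hd _ p2S; have dp := Hd _ pS.
  have m10 := meetsP (mt _ _ p1S p0S); have m20 := meetsP (mt _ _ p2S p0S).
  have m12 := meetsP (mt _ _ p1S p2S); have mp0 := meetsP (mt _ _ pS p0S).
  have mp1 := meetsP (mt _ _ pS p1S); have mp2 := meetsP (mt _ _ pS p2S).
  simpl in *.
  move: dab d1 d2 dp Hn1 Hn2.
  rewrite !negb_or => /eqP ? /eqP ? /eqP ? /eqP ? /andP [/eqP ? /eqP ?] /andP [/eqP ? /eqP ?].
  case: (u =P a) => //= ?; case: (u =P u1) => //= ?; case: (u =P v1) => //= ?.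
  exfalso; dsolve.
set A := [set p in S | p.1 == a]; set B := [set p in S | p.1 == u1]; set C := [set p in S | p.1 == v1].
have hA : #|A| <= 2 := out2 a. have hB : #|B| <= 2 := out2 u1. have hC : #|C| <= 2 := out2 v1.
have : S \subset A :|: B :|: C.
  apply/subsetP => p pS; have := claim p pS; rewrite !inE pS /=.
  by case/orP => [/orP [] -> | ->]; rewrite ?orbT.
move/subset_leq_card => H.
have H1 : #|A :|: B :|: C| <= #|A :|: B| + #|C| := leq_card_setU _ _.
have H2 : #|A :|: B| <= #|A| + #|B| := leq_card_setU _ _.
lia.
Qed.
End C.

Section Main.
Variables (T : finType) (o1 o2 : T -> T -> T) (e0 : T).
Hypotheses (g1 : is_group o1 e0) (g2 : is_group o2 e0).
Local Notation d := (dist_at o1 o2).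
Local Notation m := (mG o1 o2).
Local Notation q := (qG T).
Local Notation K := (Kset o1 o2).
Local Notation H := (Hset o1 o2).
Local Notation S := (Sset o1 o2).

Definition ex a : int := ((d a)%:Z - ((m%:Z *+ (a \in K) - m%:Z *+ (a \in H) + q%:Z - q%:Z *+ (a \in K))))%R.

Lemma distG_sum : distG o1 o2 = (\sum_a d a)%N.
Proof.
rewrite /distG /diffset /dist_at.
under eq_bigr => a _ do rewrite -sum1dep_card.
rewrite pair_big_dep /= sum1dep_card.
by apply: eq_card => p; rewrite !inE.
Qed.

Lemma n_gt0 : (0 < #|T|)%N.
Proof. by apply/card_gt0P; exists e0. Qed.

Lemma HsubK a : a \in H -> a \in K.
Proof. rewrite !inE /nG => /eqP ->; have := n_gt0; lia. Qed.

Lemma bigmin_le_nat (I : eqType) (r : seq I) (P : pred I) (F : I -> nat) x0 j :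
  j \in r -> P j -> (\big[minn/x0]_(i <- r | P i) F i <= F j)%N.
Proof.
elim: r => // i r IH; rewrite inE big_cons => /orP [/eqP <- Pj | jr Pj].
  by rewrite Pj geq_minl.
case: (P i); last exact: IH.
by rewrite geq_min IH ?orbT.
Qed.

Lemma m_le a : (0 < d a)%N -> (m <= d a)%N.
Proof. move=> Ha; apply: bigmin_le_nat => //; exact: mem_index_enum. Qed.

Lemma sum_ind (x : int) (A : {set T}) : (\sum_a x *+ (a \in A) = x *+ #|A|)%R.
Proof.
rewrite -sumr_const [RHS]big_mkcond /=; apply: eq_bigr => a _.
by rewrite mulrb.
Qed.

Lemma profit_sum : profit o1 o2 = (\sum_a ex a)%R.
Proof.
have sd : ((distG o1 o2)%:Z = \sum_i (d i)%:Z)%R.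
  by rewrite distG_sum -[LHS]intz sumMz; apply: eq_bigr => i _; rewrite intz.
rewrite /profit /ex sumrB sd.
rewrite sumrB big_split /= sumrB !sum_ind sumr_const.
rewrite /kG /hG /nG.
rewrite (_ : #|xpredT| = #|T|) //. congr (_ - _)%R. lia.
Qed.

Lemma ex_ge0 a : (0 <= ex a)%R.
Proof.
rewrite /ex; case: (boolP (a \in H)) => aH.
  rewrite (HsubK aH); move: aH; rewrite inE => /eqP ->; lia.
case: (boolP (a \in K)) => aK.
  have dpos : (0 < d a)%N by move: aH; rewrite inE lt0n.
  have := m_le dpos; lia.
move: aK; rewrite inE /qG /nG. lia.
Qed.

Lemma exK a : a \in K -> ((d a)%:Z - m%:Z <= ex a)%R.
Proof.
rewrite /ex => ->; case: (a \in H); lia.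
Qed.

Lemma exNK a : a \notin K -> ex a = ((d a)%:Z - q%:Z)%R.
Proof.
move=> aK; rewrite /ex (negbTE aK).
have -> : (a \in H) = false by apply/negP => /HsubK; rewrite (negbTE aK).
lia.
Qed.

Lemma exU a : (m < q)%N -> a \in K -> (2%:Z * ex a <= (#|T|%:Z - q%:Z - 2%:Z * m%:Z))%R.
Proof.
move=> mq aK; rewrite /ex aK.
have := aK; rewrite inE /qG /nG in mq * => dK.
case: (boolP (a \in H)) => aH; last lia.
move: aH; rewrite inE => /eqP; lia.
Qed.

Lemma Sinv p : p \in S -> [/\ o1 p.1 p.2 != o2 p.1 p.2, p.1 \in K, p.2 \in K & p.1 != p.2].
Proof. by rewrite !inE => /andP [-> /and3P [-> -> ->]]. Qed.

Lemma trip p z : p \in S -> z = o1 p.1 p.2 \/ z = o2 p.1 p.2 ->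
  z \notin K /\ ((#|T|%:Z - q%:Z - 2%:Z * m%:Z) <= ex p.1 + ex p.2 + ex z)%R.
Proof.
move=> /Sinv [D xK yK _] hz.
have hn : (#|T| <= d z + d p.1 + d p.2)%N.
  case: hz => ->; first exact: dist_prod g1 g2 _ _ D.
  rewrite !(dist_sym o1 o2); apply: dist_prod g2 g1 _ _ _; by rewrite eq_sym.
have hx : (3 * d p.1 < #|T|)%N by move: xK; rewrite inE.
have hy : (3 * d p.2 < #|T|)%N by move: yK; rewrite inE.
have zK : z \notin K by rewrite inE /nG; lia.
split => //.
have := exK xK; have := exK yK; have := exNK zK; lia.
Qed.

Lemma sum_le (l : seq T) : uniq l -> (\sum_(a <- l) ex a <= profit o1 o2)%R.
Proof.
move=> ul; rewrite profit_sum big_uniq //= [X in (X <= _)%R]big_mkcond /=.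
apply: ler_sum => a _; case: ifP => // _; exact: ex_ge0.
Qed.

Lemma neqK a z : a \in K -> z \notin K -> a != z.
Proof. by move=> aK; apply: contraNneq => <-. Qed.

End Main.

Lemma arith2 (Q a b c a' b' c' P : int) : (Q <= a + b + c -> Q <= a' + b' + c' ->
  a + (b + (a' + (b' + (c + (c' + 0))))) <= P -> 2%:Z * Q <= P)%R.
Proof. lia. Qed.

Lemma arith3 (Q x y1 y2 y3 z1 z2 z3 P : int) : (Q <= x + y1 + z1 -> Q <= x + y2 + z2 ->
  Q <= x + y3 + z3 -> 2%:Z * x <= Q ->
  x + (y1 + (y2 + (y3 + (z1 + (z2 + (z3 + 0)))))) <= P -> 2%:Z * Q <= P)%R.
Proof. lia. Qed.

Lemma arith3' (Q x y1 y2 y3 z1 z2 z3 P : int) : (Q <= y1 + x + z1 -> Q <= y2 + x + z2 ->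
  Q <= y3 + x + z3 -> 2%:Z * x <= Q ->
  x + (y1 + (y2 + (y3 + (z1 + (z2 + (z3 + 0)))))) <= P -> 2%:Z * Q <= P)%R.
Proof. lia. Qed.

Theorem lemma9p6 (T : finType) (o1 o2 : T -> T -> T) (e : T)
  (g1 : is_group o1 e) (g2 : is_group o2 e) (hdist : o1 <> o2)
  (hm : (3 <= mG o1 o2)%N) (hs : (7 <= sG o1 o2)%N) :
  (2%:Z * ((nG T)%:Z - (qG T)%:Z - 2%:Z * (mG o1 o2)%:Z) <= profit o1 o2)%R.
Proof.
rewrite /nG.
set Q : int := (#|T|%:Z - (qG T)%:Z - 2%:Z * (mG o1 o2)%:Z)%R.
have Sd p : p \in Sset o1 o2 -> p.1 != p.2 by case/Sinv.
have /card_gt0P [p0 p0S] : (0 < #|Sset o1 o2|)%N by move: hs; rewrite /sG; lia.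
have mq : (mG o1 o2 < qG T)%N.
  case/Sinv: (p0S) => D xK _ _.
  have dpos : (0 < dist_at o1 o2 p0.1)%N by apply/card_gt0P; exists p0.2; rewrite inE.
  have := m_le dpos; move: xK; rewrite inE /qG /nG; lia.
case: (comb Sd hs) => [[p [p' [pS p'S Hm]]] | [[x Hx] | [y Hy]]].
-
  set r := o1 p.1 p.2.
  have [rK hr] := trip g1 g2 pS (or_introl (erefl r)).
  have [r' [rr' [r'K hr']]] : exists r', r != r' /\ (r' \notin Kset o1 o2 /\ (Q <= ex o1 o2 p'.1 + ex o1 o2 p'.2 + ex o1 o2 r')%R).
    case: (eqVneq r (o1 p'.1 p'.2)) => E.
      exists (o2 p'.1 p'.2); split; last by have := trip g1 g2 p'S (or_intror erefl).
      by rewrite E; case/Sinv: p'S.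
    by exists (o1 p'.1 p'.2); split; last by have := trip g1 g2 p'S (or_introl erefl).
  case/Sinv: pS => _ xK yK xy; case/Sinv: p'S => _ x'K y'K x'y'.
  move: Hm; rewrite /meets !negb_or => /and4P [h1 h2 h3 h4].
  have ul : uniq [:: p.1; p.2; p'.1; p'.2; r; r'].
    rewrite /= !inE !negb_or xy h1 h2 h3 h4 x'y' rr'.
    by rewrite (neqK xK rK) (neqK yK rK) (neqK x'K rK) (neqK y'K rK) (neqK xK r'K) (neqK yK r'K) (neqK x'K r'K) (neqK y'K r'K).
  have := @sum_le _ o1 o2 e _ ul.
  rewrite !big_cons big_nil.
  move: hr hr'; rewrite -/Q; exact: arith2.
-
  have [p1 [p2 [p3 [[h1 h2 h3] [n12 n23 n31]]]]] := card_gt2P Hx.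
  have mem1 c : c \in [set p in Sset o1 o2 | p.1 == x] -> c \in Sset o1 o2 /\ c.1 = x.
    by rewrite in_set => /andP [? /eqP].
  case: (mem1 _ h1) => p1S e1; case: (mem1 _ h2) => p2S e2; case: (mem1 _ h3) => p3S e3.
  have ne (a b : T * T) : a.1 = x -> b.1 = x -> a != b -> a.2 != b.2.
    case: a b => [a1 a2] [b1 b2] /= -> ->; apply: contra => /eqP ->; by [].
  have y12 := ne _ _ e1 e2 n12; have y23 := ne _ _ e2 e3 n23; have y31 := ne _ _ e3 e1 n31.
  have [z1K t1] := trip g1 g2 p1S (or_introl erefl).
  have [z2K t2] := trip g1 g2 p2S (or_introl erefl).
  have [z3K t3] := trip g1 g2 p3S (or_introl erefl).
  rewrite e1 in z1K t1; rewrite e2 in z2K t2; rewrite e3 in z3K t3.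
  have zne (a b : T) : a != b -> o1 x a != o1 x b.
    by apply: contra => /eqP /(lcancel_g g1) ->.
  case/Sinv: p1S => _; rewrite e1 => xK y1K xy1.
  case/Sinv: p2S => _; rewrite e2 => _ y2K xy2.
  case/Sinv: p3S => _; rewrite e3 => _ y3K xy3.
  have U := exU mq xK.
  have y13 : p1.2 != p3.2 by rewrite eq_sym.
  have z12 := zne _ _ y12; have z13 := zne _ _ y13; have z23 := zne _ _ y23.
  have ul : uniq [:: x; p1.2; p2.2; p3.2; o1 x p1.2; o1 x p2.2; o1 x p3.2].
    rewrite /= !inE !negb_or xy1 xy2 xy3 y12 y13 y23 z12 z13 z23.
    rewrite (neqK xK z1K) (neqK xK z2K) (neqK xK z3K) (neqK y1K z1K) (neqK y1K z2K) (neqK y1K z3K).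
    by rewrite (neqK y2K z1K) (neqK y2K z2K) (neqK y2K z3K) (neqK y3K z1K) (neqK y3K z2K) (neqK y3K z3K).
  have := @sum_le _ o1 o2 e _ ul.
  rewrite !big_cons big_nil.
  move: t1 t2 t3 U; rewrite -/Q; exact: arith3.
-
  have [p1 [p2 [p3 [[h1 h2 h3] [n12 n23 n31]]]]] := card_gt2P Hy.
  have mem1 c : c \in [set p in Sset o1 o2 | p.2 == y] -> c \in Sset o1 o2 /\ c.2 = y.
    by rewrite in_set => /andP [? /eqP].
  case: (mem1 _ h1) => p1S e1; case: (mem1 _ h2) => p2S e2; case: (mem1 _ h3) => p3S e3.
  have ne (a b : T * T) : a.2 = y -> b.2 = y -> a != b -> a.1 != b.1.
    case: a b => [a1 a2] [b1 b2] /= -> ->; apply: contra => /eqP ->; by [].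
  have y12 := ne _ _ e1 e2 n12; have y23 := ne _ _ e2 e3 n23; have y31 := ne _ _ e3 e1 n31.
  have [z1K t1] := trip g1 g2 p1S (or_introl erefl).
  have [z2K t2] := trip g1 g2 p2S (or_introl erefl).
  have [z3K t3] := trip g1 g2 p3S (or_introl erefl).
  rewrite e1 in z1K t1; rewrite e2 in z2K t2; rewrite e3 in z3K t3.
  have zne (a b : T) : a != b -> o1 a y != o1 b y.
    by apply: contra => /eqP /(rcancel_g g1) ->.
  case/Sinv: p1S => _; rewrite e1 => x1K yK xy1.
  case/Sinv: p2S => _; rewrite e2 => x2K _ xy2.
  case/Sinv: p3S => _; rewrite e3 => x3K _ xy3.
  have U := exU mq yK.
  have y13 : p1.1 != p3.1 by rewrite eq_sym.
  have z12 := zne _ _ y12; have z13 := zne _ _ y13; have z23 := zne _ _ y23.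
  have yx1 : y != p1.1 by rewrite eq_sym.
  have yx2 : y != p2.1 by rewrite eq_sym.
  have yx3 : y != p3.1 by rewrite eq_sym.
  have ul : uniq [:: y; p1.1; p2.1; p3.1; o1 p1.1 y; o1 p2.1 y; o1 p3.1 y].
    rewrite /= !inE !negb_or yx1 yx2 yx3 y12 y13 y23 z12 z13 z23.
    rewrite (neqK yK z1K) (neqK yK z2K) (neqK yK z3K) (neqK x1K z1K) (neqK x1K z2K) (neqK x1K z3K).
    by rewrite (neqK x2K z1K) (neqK x2K z2K) (neqK x2K z3K) (neqK x3K z1K) (neqK x3K z2K) (neqK x3K z3K).
  have := @sum_le _ o1 o2 e _ ul.
  rewrite !big_cons big_nil.
  move: t1 t2 t3 U; rewrite -/Q; exact: arith3'.
Qed.
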